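(* Let $Q$ be any quandle and let $K$ be an oriented knot whose symmetry type is reversible, positive amphicheiral, or fully amphicheiral (i.e. not chiral and not negative amphicheiral). Then $$\mathrm{Col}_Q(rm(K))=\mathrm{Col}_Q(m(K))=\mathrm{Col}_Q(r(K))=\mathrm{Col}_Q(K).$$
   Context: A quandle is a set $X$ with a binary operation $*$ such that $a*a=a$ for all $a$; for all $b,c$ there is a unique $a$ with $a*b=c$; and $(a*b)*c=(a*c)*(b*c)$ for all $a,b,c$. A coloring of an oriented knot diagram by a quandle $X$ is a map from the set of arcs of the diagram to $X$ such that at each crossing, if the over-arc is colored $y$ and the under-arc on one side (determined by the orientation of the over-arc, under a fixed standard convention) is colored $x$, then the under-arc on the other side is colored $x*y$. Equivalently, colorings correspond bijectively to quandle homomorphisms from the fundamental quandle of the knot to $X$. $\mathrm{Col}_Q(K)$ denotes the number (cardinality) of colorings of a diagram of $K$ by $Q$; it is a knot invariant. For an oriented knot $K$, $m(K)$ is its mirror image and $r(K)$ is $K$ with orientation reversed; $K=K'$ means there is an orientation-preserving homeomorphism of $S^3$ taking $K$ to $K'$ respecting orientations. $K$ is reversible if its only symmetry is $K=r(K)$; negative amphicheiral if its only symmetry is $K=rm(K)$; positive amphicheiral if its only symmetry is $K=m(K)$; chiral if it has none of the symmetries $K=r(K)$, $K=m(K)$, $K=rm(K)$; fully amphicheiral if $K=r(K)=m(K)=rm(K)$. *)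

(* Defs.v *)
(* Oriented knots are modelled as closed braids
   (Alexander's theorem), and ambient isotopy of oriented knots in S^3
   (K = K' in the paper) as Markov equivalence of braid words (Markov's
   theorem). *)
From mathcomp Require Import all_boot.
From Stdlib Require Import Relations.

Set Implicit Arguments.
Unset Strict Implicit.
Unset Printing Implicit Defensive.

Record quandle := Quandle {
  qcar :> Type;
  qop : qcar -> qcar -> qcar;
  qop_idem : forall a, qop a a = a;
  qop_rinv : forall b c, exists! a, qop a b = c;
  qop_dist : forall a b c, qop (qop a b) c = qop (qop a c) (qop b c)
}.

(* A letter (i, true) is the Artin generator sigma_(i+1)
   (0-based index i, crossing between strand positions i and i+1),
   (i, false) is its inverse.  A braid is (number of strands, word).   *)
Definition letter := (nat * bool)%type.
Definition braid := (nat * seq letter)%type.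

Definition valid_braid (b : braid) : bool :=
  (0 < b.1) && all (fun a : letter => a.1.+1 < b.1) b.2.

Definition swap_pos (i j : nat) : nat :=
  if j == i then i.+1 else if j == i.+1 then i else j.
Definition braid_perm (w : seq letter) (j : nat) : nat :=
  foldl (fun p (a : letter) => swap_pos a.1 p) j w.

(* the closure of the braid is a knot (one component) *)
Definition is_knot (b : braid) : Prop :=
  valid_braid b /\
  forall j, j < b.1 -> exists k, iter k (braid_perm b.2) 0 = j.

Inductive markov_step : braid -> braid -> Prop :=
| MCancel n w1 w2 i b :
    valid_braid (n, w1 ++ (i, b) :: (i, ~~ b) :: w2) ->
    markov_step (n, w1 ++ (i, b) :: (i, ~~ b) :: w2) (n, w1 ++ w2)
| MComm n w1 w2 i j b c :
    i.+1 < j ->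
    valid_braid (n, w1 ++ (i, b) :: (j, c) :: w2) ->
    markov_step (n, w1 ++ (i, b) :: (j, c) :: w2) (n, w1 ++ (j, c) :: (i, b) :: w2)
| MBraid n w1 w2 i b :
    valid_braid (n, w1 ++ (i, b) :: (i.+1, b) :: (i, b) :: w2) ->
    markov_step (n, w1 ++ (i, b) :: (i.+1, b) :: (i, b) :: w2)
                (n, w1 ++ (i.+1, b) :: (i, b) :: (i.+1, b) :: w2)
| MConj n a w :
    valid_braid (n, a :: w) ->
    markov_step (n, a :: w) (n, w ++ [:: a])
| MStab n w b :
    valid_braid (n, w) ->
    markov_step (n, w) (n.+1, w ++ [:: (n.-1, b)]).

Definition knot_equiv (K K' : braid) : Prop :=
  clos_refl_sym_trans braid markov_step K K'.

Definition mirror (K : braid) : braid :=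
  (K.1, map (fun a : letter => (a.1, ~~ a.2)) K.2).
Definition reverse (K : braid) : braid := (K.1, rev K.2).

Definition reversible (K : braid) : Prop :=
  knot_equiv K (reverse K) /\ ~ knot_equiv K (mirror K) /\
  ~ knot_equiv K (reverse (mirror K)).
Definition negative_amphicheiral (K : braid) : Prop :=
  knot_equiv K (reverse (mirror K)) /\ ~ knot_equiv K (reverse K) /\
  ~ knot_equiv K (mirror K).
Definition positive_amphicheiral (K : braid) : Prop :=
  knot_equiv K (mirror K) /\ ~ knot_equiv K (reverse K) /\
  ~ knot_equiv K (reverse (mirror K)).
Definition fully_amphicheiral (K : braid) : Prop :=
  knot_equiv K (reverse K) /\ knot_equiv K (mirror K) /\
  knot_equiv K (reverse (mirror K)).

(* A state assigns a
   color to each of the n strand segments at a given level; at a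
   positive crossing sigma_i the over strand goes from position i+1 to i
   keeping its color y and the under strand goes from i to i+1 and gets
   color x * y; a negative crossing is the mirror situation.           *)
Definition state (Q : quandle) (n : nat) := 'I_n -> Q.

Definition cross_step (Q : quandle) (n : nat) (a : letter)
    (x y : state Q n) : Prop :=
  (forall j : 'I_n, val j != a.1 -> val j != a.1.+1 -> y j = x j) /\
  (forall j k : 'I_n, val j = a.1 -> val k = a.1.+1 ->
     if a.2 then y j = x k /\ y k = qop (x j) (x k)
     else y k = x j /\ x k = qop (y j) (x j)).

Fixpoint col_path (Q : quandle) (n : nat) (w : seq letter)
    (x : state Q n) (s : seq (state Q n)) : Prop :=
  match w, s with
  | [::], [::] => True
  | a :: w', y :: s' => cross_step a x y /\ col_path w' y s'
  | _, _ => False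
  end.

Definition coloring (Q : quandle) (K : braid) : Type :=
  { p : state Q K.1 * seq (state Q K.1) |
      col_path K.2 p.1 p.2 /\ last p.1 p.2 = p.1 }.

Definition same_card (A B : Type) : Prop := exists f : A -> B, bijective f.

(* Main.v *)
Require Import Defs.
From mathcomp Require Import all_boot.
From mathcomp Require Import zify.
From Stdlib Require Import IndefiniteDescription ProofIrrelevance FunctionalExtensionality Relations.

Set Implicit Arguments.
Unset Strict Implicit.
Unset Printing Implicit Defensive.

Lemma qdiv_ex (Q : quandle) (c b : Q) : exists a, qop a b = c.
Proof. by case: (qop_rinv b c) => a [Ha _]; exists a. Qed.

Definition qdiv (Q : quandle) (c b : Q) : Q :=
  proj1_sig (constructive_indefinite_description _ (qdiv_ex c b)).

Lemma qdivK (Q : quandle) (c b : Q) : qop (qdiv c b) b = c.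
Proof. exact: (proj2_sig (constructive_indefinite_description _ (qdiv_ex c b))). Qed.

Lemma qop_inj (Q : quandle) (b a a' : Q) : qop a b = qop a' b -> a = a'.
Proof.
move=> E; case: (qop_rinv b (qop a b)) => z [_ Hz].
by rewrite -(Hz a erefl) -(Hz a' (esym E)).
Qed.

Lemma qopK (Q : quandle) (a b : Q) : qdiv (qop a b) b = a.
Proof. by apply: (@qop_inj _ b); rewrite qdivK. Qed.

Lemma qdivv (Q : quandle) (c : Q) : qdiv c c = c.
Proof. by rewrite -{1}(qop_idem c) qopK. Qed.

Lemma qdiv_dist (Q : quandle) (a b c : Q) :
  qdiv (qdiv c a) (qdiv b a) = qdiv (qdiv c b) a.
Proof.
apply: (@qop_inj _ (qdiv b a)); rewrite qdivK.
apply: (@qop_inj _ a); rewrite qop_dist !qdivK //.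
Qed.

Definition stepN (Q : quandle) (a : letter) (x : nat -> Q) : nat -> Q :=
  fun k => if k == a.1 then (if a.2 then x a.1.+1 else qdiv (x a.1.+1) (x a.1))
  else if k == a.1.+1 then (if a.2 then qop (x a.1) (x a.1.+1) else x a.1) else x k.

Definition actN (Q : quandle) (w : seq letter) (x : nat -> Q) : nat -> Q :=
  foldl (fun y a => stepN a y) x w.

Ltac decide_eqs :=
  rewrite /stepN /=;
  repeat (rewrite ?eqxx /=; match goal with |- context[?a == ?b] =>
    let E := fresh "E" in
    case: (@eqP _ a b) => [E|E]; [first [(exfalso; lia) | subst] | ] end);
  try (exfalso; lia); try reflexivity.

Lemma stepN_cancel (Q : quandle) i b (x : nat -> Q) :
  stepN (i, ~~ b) (stepN (i, b) x) = x.
Proof.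
apply: functional_extensionality => k; case: b; decide_eqs;
  by rewrite ?qopK ?qdivK.
Qed.

Lemma stepN_comm (Q : quandle) i j b c (x : nat -> Q) : i.+1 < j ->
  stepN (j, c) (stepN (i, b) x) = stepN (i, b) (stepN (j, c) x).
Proof.
move=> h; apply: functional_extensionality => k; case: b; case: c; decide_eqs.
Qed.

Lemma stepN_braid (Q : quandle) i b (x : nat -> Q) :
  stepN (i, b) (stepN (i.+1, b) (stepN (i, b) x)) =
  stepN (i.+1, b) (stepN (i, b) (stepN (i.+1, b) x)).
Proof.
apply: functional_extensionality => k; case: b; decide_eqs.
  exact: qop_dist.
exact: qdiv_dist.
Qed.

Definition eqn (Q : quandle) n (f g : nat -> Q) := forall k, k < n -> f k = g k.
Definition okw (n : nat) (w : seq letter) := all (fun a : letter => a.1.+1 < n) w.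

Lemma eqn_sym (Q : quandle) n (f g : nat -> Q) : eqn n f g -> eqn n g f.
Proof. by move=> h k hk; rewrite h. Qed.
Lemma eqn_trans (Q : quandle) n (f g h : nat -> Q) : eqn n f g -> eqn n g h -> eqn n f h.
Proof. by move=> h1 h2 k hk; rewrite h1 // h2. Qed.

Lemma stepN_loc (Q : quandle) a n (x y : nat -> Q) : a.1.+1 < n -> eqn n x y ->
  eqn n (stepN a x) (stepN a y).
Proof.
case: a => i b /= hi h k hk; rewrite /stepN /=.
have hi0 : i < n by lia.
case: eqP => _; first by rewrite !h.
case: eqP => _; first by rewrite !h.
by rewrite h.
Qed.

Lemma actN_loc (Q : quandle) w n (x y : nat -> Q) : okw n w -> eqn n x y ->
  eqn n (actN w x) (actN w y).
Proof.
elim: w x y => [|a w IH] x y //= /andP [ha hw] h.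
exact: (IH _ _ hw (stepN_loc ha h)).
Qed.

Lemma actN_supp (Q : quandle) w n (x : nat -> Q) : okw n w ->
  forall k, n <= k -> actN w x k = x k.
Proof.
elim: w x => [|a w IH] x //= /andP [ha hw] k hk.
rewrite (IH _ hw k hk); case: a ha => i b /= ha; rewrite /stepN /=.
case: eqP => ?; first lia. case: eqP => ?; first lia. by [].
Qed.

Lemma actN_cat (Q : quandle) w1 w2 (x : nat -> Q) :
  actN (w1 ++ w2) x = actN w2 (actN w1 x).
Proof. by rewrite /actN foldl_cat. Qed.

Definition ext (Q : quandle) m (x : 'I_m.+1 -> Q) : nat -> Q := fun k => x (inord k).
Definition res (Q : quandle) n (f : nat -> Q) : 'I_n -> Q := fun j => f (val j).
Arguments res {Q} n f.

Lemma ext_res (Q : quandle) m (f : nat -> Q) : eqn m.+1 (ext (res m.+1 f)) f.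
Proof. by move=> k hk; rewrite /ext /res /= inordK. Qed.

Lemma res_ext (Q : quandle) m (x : 'I_m.+1 -> Q) : res m.+1 (ext x) = x.
Proof. by apply: functional_extensionality => j; rewrite /res /ext inord_val. Qed.

Lemma res_eqn (Q : quandle) n (f g : nat -> Q) : eqn n f g -> res n f = res n g.
Proof. by move=> h; apply: functional_extensionality => j; rewrite /res (h _ (ltn_ord j)). Qed.

Lemma res_eqP (Q : quandle) m (f : nat -> Q) (x : 'I_m.+1 -> Q) :
  res m.+1 f = x <-> eqn m.+1 f (ext x).
Proof.
split.
  by move=> <- k hk; rewrite /ext /res /= inordK.
by move=> h; rewrite (res_eqn h) res_ext.
Qed.

Definition stepS (Q : quandle) m (a : letter) (x : 'I_m.+1 -> Q) : 'I_m.+1 -> Q :=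
  res m.+1 (stepN a (ext x)).
Definition actS (Q : quandle) m (w : seq letter) (x : 'I_m.+1 -> Q) : 'I_m.+1 -> Q :=
  foldl (fun y a => stepS a y) x w.

Lemma actS_N (Q : quandle) m w (x : 'I_m.+1 -> Q) : okw m.+1 w ->
  actS w x = res m.+1 (actN w (ext x)).
Proof.
elim: w x => [|a w IH] x /=; first by rewrite res_ext.
case/andP => ha hw; rewrite IH //; apply: res_eqn.
apply: actN_loc => //; exact: ext_res.
Qed.

Lemma actS_cat (Q : quandle) m w1 w2 (x : 'I_m.+1 -> Q) :
  actS (w1 ++ w2) x = actS w2 (actS w1 x).
Proof. by rewrite /actS foldl_cat. Qed.

Lemma cross_stepE (Q : quandle) m (a : letter) (x y : 'I_m.+1 -> Q) :
  a.1.+1 < m.+1 -> (cross_step a x y <-> y = stepS a x).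
Proof.
case: a => i b /= hi.
have hi0 : i < m.+1 by lia.
pose i0 := Ordinal hi0; pose i1 := Ordinal hi.
have E0 : ext x i = x i0 by rewrite /ext; congr x; apply: val_inj; rewrite /= inordK.
have E1 : ext x i.+1 = x i1 by rewrite /ext; congr x; apply: val_inj; rewrite /= inordK.
split.
  case=> [H1 H2]; rewrite /= in H1; apply: functional_extensionality => j.
  rewrite /stepS /res /stepN /= E0 E1.
  have := H2 i0 i1 erefl erefl; clear H2; case: b => /= [[Ha Hb]|[Ha Hb]].
    case: eqP => ej; first by rewrite (_ : j = i0) //; apply: val_inj.
    case: eqP => ej'; first by rewrite (_ : j = i1) //; apply: val_inj.
    by rewrite H1; [rewrite /ext inord_val|apply/eqP|apply/eqP].
  case: eqP => ej; first by rewrite (_ : j = i0); [rewrite Hb qopK|apply: val_inj].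
  case: eqP => ej'; first by rewrite (_ : j = i1) //; apply: val_inj.
  by rewrite H1; [rewrite /ext inord_val|apply/eqP|apply/eqP].
move=> ->; split.
  move=> j /eqP n1 /eqP n2; rewrite /stepS /res /stepN /=.
  case: eqP => // _; case: eqP => // _; by rewrite /ext inord_val.
move=> j k /= ej ek; rewrite /stepS /res /stepN /= ej ek eqxx.
have -> : (i.+1 == i) = false by apply/eqP; lia.
rewrite E0 E1 (_ : j = i0); last by apply: val_inj.
rewrite (_ : k = i1); last by apply: val_inj.
clear ej ek; by case: b; rewrite /= ?eqxx ?qdivK.
Qed.


Lemma sig_eq (A : Type) (P : A -> Prop) (u v : {x | P x}) :
  proj1_sig u = proj1_sig v -> u = v.
Proof.
case: u => x hx; case: v => y hy /= e; subst y; f_equal; apply: proof_irrelevance.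
Qed.

Lemma sc_mk (A B : Type) (f : A -> B) (g : B -> A) :
  cancel f g -> cancel g f -> same_card A B.
Proof. by move=> h1 h2; exists f; exact: (Bijective h1 h2). Qed.

Lemma sc_sym (A B : Type) : same_card A B -> same_card B A.
Proof. by case=> f [g h1 h2]; exists g; exact: (Bijective h2 h1). Qed.

Lemma sc_trans (A B C : Type) : same_card A B -> same_card B C -> same_card A C.
Proof.
case=> f [g h1 h2]; case=> f' [g' h1' h2'].
by apply: (sc_mk (f := f' \o f) (g := g \o g')) => x /=; rewrite ?h1' ?h1 ?h2 ?h2'.
Qed.

Lemma sc_refl (A : Type) : same_card A A.
Proof. by apply: (sc_mk (f := id) (g := id)). Qed.

Fixpoint traj (Q : quandle) m (w : seq letter) (x : 'I_m.+1 -> Q) : seq ('I_m.+1 -> Q) :=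
  match w with [::] => [::] | a :: w' => stepS a x :: traj w' (stepS a x) end.

Lemma col_pathE (Q : quandle) m w : okw m.+1 w ->
  forall (x : 'I_m.+1 -> Q) s, col_path w x s <-> s = traj w x.
Proof.
elim: w => [|a w IH] hw x [|y s] //=.
case/andP: hw => ha hw; rewrite (cross_stepE _ _ ha) (IH hw); split.
  by case=> -> ->.
by case=> -> ->.
Qed.

Lemma last_traj (Q : quandle) m w (x : 'I_m.+1 -> Q) : last x (traj w x) = actS w x.
Proof. by elim: w x => //= a w IH x; exact: IH. Qed.

Definition Fix (Q : quandle) m w := { x : 'I_m.+1 -> Q | actS w x = x }.

Lemma col_fix (Q : quandle) m w : okw m.+1 w ->
  same_card (coloring Q (m.+1, w)) (Fix Q m w).
Proof.
move=> hw.
have F : forall p : coloring Q (m.+1, w), actS w (sval p).1 = (sval p).1.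
  move=> [[x s] [hp hl]] /=; move/(col_pathE hw): hp => hs.
  by rewrite -last_traj -hs.
have G : forall x : Fix Q m w, col_path w (sval x) (traj w (sval x)) /\
          last (sval x) (traj w (sval x)) = sval x.
  by move=> [x hx] /=; split; [apply/(col_pathE hw) | rewrite last_traj].
apply: (sc_mk (f := fun p => exist _ (sval p).1 (F p))
              (g := fun x => exist _ (sval x, traj w (sval x)) (G x))).
  move=> p; apply: sig_eq => /=; case: p {F G} => [[x s] [hp _]] /=.
  by congr pair; symmetry; apply/(col_pathE hw).
by move=> x; apply: sig_eq.
Qed.

Lemma fix_eq (Q : quandle) m w w' : (forall x : 'I_m.+1 -> Q, actS w x = actS w' x) ->
  same_card (Fix Q m w) (Fix Q m w').
Proof.
move=> E.
have F : forall x : Fix Q m w, actS w' (sval x) = sval x by move=> [x hx] /=; rewrite -E.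
have G : forall x : Fix Q m w', actS w (sval x) = sval x by move=> [x hx] /=; rewrite E.
apply: (sc_mk (f := fun x => exist _ (sval x) (F x)) (g := fun x => exist _ (sval x) (G x)));
  by move=> x; apply: sig_eq.
Qed.

Lemma actN_cons (Q : quandle) a w (x : nat -> Q) : actN (a :: w) x = actN w (stepN a x).
Proof. by []. Qed.

Lemma eqn_fix (Q : quandle) n w (X Y : nat -> Q) : eqn n X Y -> okw n w ->
  eqn n (actN w X) X -> eqn n (actN w Y) Y.
Proof.
move=> h hw hX k hk.
by rewrite -(actN_loc hw h hk) hX // h.
Qed.

Lemma stepN_at1 (Q : quandle) i b (x : nat -> Q) :
  stepN (i, b) x i = if b then x i.+1 else qdiv (x i.+1) (x i).
Proof. by rewrite /stepN /= eqxx. Qed.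

Lemma stepN_at2 (Q : quandle) i b (x : nat -> Q) :
  stepN (i, b) x i.+1 = if b then qop (x i) (x i.+1) else x i.
Proof.
rewrite /stepN /= eqxx; have -> : (i.+1 == i) = false by apply/eqP; lia.
by [].
Qed.

Lemma stepN_other (Q : quandle) i b (x : nat -> Q) k : k != i -> k != i.+1 ->
  stepN (i, b) x k = x k.
Proof. by move=> h1 h2; rewrite /stepN /= (negbTE h1) (negbTE h2). Qed.

Lemma stab_nat (Q : quandle) m w b (X : nat -> Q) : okw m.+1 w ->
  eqn m.+2 (actN (w ++ [:: (m, b)]) X) X <-> (eqn m.+1 (actN w X) X /\ X m.+1 = X m).
Proof.
move=> hw; rewrite actN_cat.
have hY : actN w X m.+1 = X m.+1 := actN_supp X hw (leqnn _).
move: hY; move: (actN w X) => Y hY.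
change (eqn m.+2 (stepN (m, b) Y) X <-> eqn m.+1 Y X /\ X m.+1 = X m).
split.
  move=> H.
  have Hm := H m (ltnW (ltnSn _)); have Hm1 := H m.+1 (ltnSn _).
  rewrite stepN_at1 in Hm; rewrite stepN_at2 in Hm1.
  have [E1 E2] : X m.+1 = X m /\ Y m = X m.
    case: b {H} Hm Hm1 => /= Hm Hm1.
      have E : X m.+1 = X m by rewrite -hY.
      split => //; apply: (@qop_inj _ (X m)); rewrite qop_idem -{1}E -hY Hm1.
      by [].
    have E : X m.+1 = X m by rewrite -Hm hY -Hm1 qdivv.
    by split => //; rewrite Hm1.
  split => // k hk.
  have [->|km] := eqVneq k m; first exact: E2.
  have := H k (ltnW hk); rewrite stepN_other //.
  by apply/eqP; lia.
case=> H1 H2 k hk.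
have [->|km] := eqVneq k m.
  by rewrite stepN_at1; case: b; rewrite hY ?H1 // H2 qdivv.
have [->|km1] := eqVneq k m.+1.
  by rewrite stepN_at2; case: b; rewrite /= ?hY ?H1 // H2 qop_idem.
rewrite stepN_other // H1 //; lia.
Qed.

Definition upd (Q : quandle) m (f : nat -> Q) : nat -> Q :=
  fun k => if k == m.+1 then f m else f k.

Lemma fix_stab (Q : quandle) m w b : okw m.+1 w ->
  same_card (Fix Q m w) (Fix Q m.+1 (w ++ [:: (m, b)])).
Proof.
move=> hw.
have hW : okw m.+2 (w ++ [:: (m, b)]).
  rewrite /okw all_cat /= andbT ltnSn andbT.
  by apply: sub_all hw => a /= h; lia.
have fixE : forall m' w' (x : 'I_m'.+1 -> Q), okw m'.+1 w' ->
    actS w' x = x <-> eqn m'.+1 (actN w' (ext x)) (ext x).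
  by move=> m' w' x h; rewrite actS_N // res_eqP.
have F : forall x : Fix Q m.+1 (w ++ [:: (m, b)]),
    actS w (res m.+1 (ext (sval x))) = res m.+1 (ext (sval x)).
  move=> [x hx] /=; apply/fixE => //.
  move/(fixE _ _ _ hW)/(stab_nat _ _ hw): hx => [hx _].
  by apply: eqn_fix hw hx; apply: eqn_sym; apply: ext_res.
have G : forall y : Fix Q m w,
    actS (w ++ [:: (m, b)]) (res m.+2 (upd m (ext (sval y)))) =
    res m.+2 (upd m (ext (sval y))).
  move=> [y hy] /=; apply/fixE => //.
  apply: (eqn_fix (X := upd m (ext y))) => //.
    by apply: eqn_sym; apply: ext_res.
  apply/stab_nat => //; split; last first.
    by rewrite /upd eqxx; have -> : (m == m.+1) = false by apply/eqP; lia.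
  move/(fixE _ _ _ hw): hy => hy.
  apply: (eqn_fix (X := ext y)) => // k hk.
  by rewrite /upd; have -> : (k == m.+1) = false by apply/eqP; lia.
apply: sc_sym.
apply: (sc_mk (f := fun x => exist (fun z => actS w z = z) (res m.+1 (ext (sval x))) (F x))
   (g := fun y => exist (fun z => actS (w ++ [:: (m, b)]) z = z)
                        (res m.+2 (upd m (ext (sval y)))) (G y))).
  move=> [x hx]; apply: sig_eq => /=; apply/res_eqP => k hk.
  move/(fixE _ _ _ hW)/(stab_nat _ _ hw): hx => [_ hx].
  rewrite /upd; case: eqP => [->|kn]; last by rewrite ext_res //; lia.
  by rewrite ext_res // hx.
move=> [y hy]; apply: sig_eq => /=; apply/res_eqP => k hk.
rewrite ext_res; last by lia.
by rewrite /upd; have -> : (k == m.+1) = false by apply/eqP; lia.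
Qed.

Definition flipl (a : letter) : letter := (a.1, ~~ a.2).

Lemma flipK (a : letter) : flipl (flipl a) = a.
Proof. by case: a => i b; rewrite /flipl /= negbK. Qed.

Lemma stepS_flip (Q : quandle) m (a : letter) (x : 'I_m.+1 -> Q) : a.1.+1 < m.+1 ->
  stepS (flipl a) (stepS a x) = x.
Proof.
move=> h.
rewrite (_ : stepS (flipl a) (stepS a x) = actS [:: a; flipl a] x) //.
rewrite actS_N; last by rewrite /okw /= h.
by case: a h => i b _; rewrite /actN /= stepN_cancel res_ext.
Qed.

Lemma stepS_flip' (Q : quandle) m (a : letter) (x : 'I_m.+1 -> Q) : a.1.+1 < m.+1 ->
  stepS a (stepS (flipl a) x) = x.
Proof. by move=> h; have := @stepS_flip Q m (flipl a) x h; rewrite flipK. Qed.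

Lemma actS_rm (Q : quandle) m w : okw m.+1 w -> forall x : 'I_m.+1 -> Q,
  actS (rev (map flipl w)) (actS w x) = x /\ actS w (actS (rev (map flipl w)) x) = x.
Proof.
elim: w => [|a w IH] hw x; first by [].
case/andP: hw => ha hw; rewrite map_cons rev_cons -cats1 !actS_cat; split.
  change (actS [:: flipl a] (actS (rev (map flipl w)) (actS w (stepS a x))) = x).
  by rewrite (IH hw _).1 /= stepS_flip.
change (actS w (stepS a (stepS (flipl a) (actS (rev (map flipl w)) x))) = x).
by rewrite stepS_flip' // (IH hw x).2.
Qed.

Lemma fix_rm (Q : quandle) m w : okw m.+1 w ->
  same_card (Fix Q m w) (Fix Q m (rev (map flipl w))).
Proof.
move=> hw.
have F : forall x : Fix Q m w, actS (rev (map flipl w)) (sval x) = sval x.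
  by move=> [x hx] /=; have := (actS_rm hw x).1; rewrite hx.
have G : forall x : Fix Q m (rev (map flipl w)), actS w (sval x) = sval x.
  by move=> [x hx] /=; have := (actS_rm hw x).2; rewrite hx.
apply: (sc_mk (f := fun x => exist _ (sval x) (F x)) (g := fun x => exist _ (sval x) (G x)));
  by move=> x; apply: sig_eq.
Qed.

Lemma col_rm (Q : quandle) n w : valid_braid (n, w) ->
  same_card (coloring Q (n, w)) (coloring Q (n, rev (map flipl w))).
Proof.
case: n => [|m] hv; first by [].
have hw : okw m.+1 w by case/andP: hv.
have hw' : okw m.+1 (rev (map flipl w)) by rewrite /okw all_rev all_map.
apply: sc_trans (col_fix Q hw) _; apply: sc_trans (fix_rm Q hw) _.
exact: sc_sym (col_fix Q hw').
Qed.

Lemma markov_card (Q : quandle) K K' : markov_step K K' ->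
  same_card (coloring Q K) (coloring Q K').
Proof.
case => [n w1 w2 i b hv | n w1 w2 i j b c hij hv | n w1 w2 i b hv | n a w hv | n w b hv];
  (case: n hv => [|m] hv; first by []).
- have hw : okw m.+1 (w1 ++ (i, b) :: (i, ~~ b) :: w2) by case/andP: hv.
  have hw' : okw m.+1 (w1 ++ w2).
    by move: hw; rewrite /okw !all_cat /= => /andP [-> /and3P [_ _ ->]].
  apply: sc_trans (col_fix Q hw) _; apply: sc_trans _ (sc_sym (col_fix Q hw')).
  apply: fix_eq => x; rewrite !actS_N //; congr (res _ _).
  by rewrite !actN_cat !actN_cons stepN_cancel.
- have hw : okw m.+1 (w1 ++ (i, b) :: (j, c) :: w2) by case/andP: hv.
  have hw' : okw m.+1 (w1 ++ (j, c) :: (i, b) :: w2).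
    by move: hw; rewrite /okw !all_cat /= => /andP [-> /and3P [-> -> ->]].
  apply: sc_trans (col_fix Q hw) _; apply: sc_trans _ (sc_sym (col_fix Q hw')).
  apply: fix_eq => x; rewrite !actS_N //; congr (res _ _).
  by rewrite !actN_cat !actN_cons stepN_comm.
- have hw : okw m.+1 (w1 ++ (i, b) :: (i.+1, b) :: (i, b) :: w2) by case/andP: hv.
  have hw' : okw m.+1 (w1 ++ (i.+1, b) :: (i, b) :: (i.+1, b) :: w2).
    move: hw; rewrite /okw !all_cat /= => /andP [-> /and4P [h1 h2 h3 ->]].
    by rewrite h1 h2.
  apply: sc_trans (col_fix Q hw) _; apply: sc_trans _ (sc_sym (col_fix Q hw')).
  apply: fix_eq => x; rewrite !actS_N //; congr (res _ _).
  by rewrite !actN_cat !actN_cons stepN_braid.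
- have hw : okw m.+1 (a :: w) by case/andP: hv.
  have hw' : okw m.+1 (w ++ [:: a]).
    by move: hw; rewrite /okw all_cat /= andbT andbC.
  apply: sc_trans (col_fix Q hw) _; apply: sc_trans _ (sc_sym (col_fix Q hw')).
  have F : forall x : Fix Q m (a :: w), actS (w ++ [:: a]) (stepS a (sval x)) = stepS a (sval x).
    by move=> [x hx] /=; rewrite actS_cat /=; congr (stepS a); exact: hx.
  have G : forall y : Fix Q m (w ++ [:: a]), actS (a :: w) (actS w (sval y)) = actS w (sval y).
    move=> [y hy] /=; change (actS w (stepS a (actS w y)) = actS w y).
    by congr (actS w); rewrite actS_cat /= in hy.
  apply: (sc_mk (f := fun x => exist _ (stepS a (sval x)) (F x))
                (g := fun y => exist _ (actS w (sval y)) (G y))).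
    by move=> [x hx]; apply: sig_eq.
  by move=> [y hy]; apply: sig_eq => /=; rewrite actS_cat /= in hy.
- have hw : okw m.+1 w by case/andP: hv.
  have hw' : okw m.+2 (w ++ [:: (m, b)]).
    rewrite /okw all_cat /= andbT ltnSn andbT.
    by apply: sub_all hw => a /= h; lia.
  apply: sc_trans (col_fix Q hw) _; apply: sc_trans _ (sc_sym (col_fix Q hw')).
  exact: fix_stab.
Qed.

Lemma equiv_card (Q : quandle) K K' : knot_equiv K K' ->
  same_card (coloring Q K) (coloring Q K').
Proof.
elim => [x y h|x|x y _ IH|x y z _ IH1 _ IH2].
- exact: markov_card.
- exact: sc_refl.
- exact: sc_sym.
- exact: sc_trans IH1 IH2.
Qed.

Lemma map_flipK (w : seq letter) : map flipl (map flipl w) = w.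
Proof. by elim: w => //= a w ->; rewrite flipK. Qed.

Theorem corollary3p3 (Q : quandle) (K : braid) :
  is_knot K ->
  (reversible K \/ positive_amphicheiral K \/ fully_amphicheiral K) ->
  same_card (coloring Q (reverse (mirror K))) (coloring Q (mirror K)) /\
  same_card (coloring Q (mirror K)) (coloring Q (reverse K)) /\
  same_card (coloring Q (reverse K)) (coloring Q K).
Proof.
case: K => n w [hv _] hsym.
have A : same_card (coloring Q (n, w)) (coloring Q (reverse (mirror (n, w)))).
  exact: col_rm hv.
have hv' : valid_braid (n, map flipl w).
  by move: hv; rewrite /valid_braid /= all_map.
have B : same_card (coloring Q (mirror (n, w))) (coloring Q (reverse (n, w))).
  have := col_rm Q hv'; rewrite map_flipK; exact.
have key : same_card (coloring Q (n, w)) (coloring Q (reverse (n, w))).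
  case: hsym => [[h _]|[[h _]|[h _]]]; try exact: equiv_card h.
  exact: sc_trans (equiv_card Q h) B.
split; last split.
- exact: sc_trans (sc_sym A) (sc_trans key (sc_sym B)).
- exact: B.
- exact: sc_sym key.
Qed.
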